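(* Let $M$ be a representation of a quiver $Q$ with $\operatorname{Ext}^1(M,M)=0$. Then for every arrow $\alpha\colon x\to y$ of $Q$, the linear map $M_\alpha\colon M_x\to M_y$ is injective or surjective.
   Context: $k$ is a field; $Q$ is a locally finite quiver; representations are finite-dimensional over $k$, and $\operatorname{Ext}^1$ is computed in the category of finite-dimensional representations of $Q$. *)

(* Defs.v *)
(* Finite-dimensional quiver representations over a field k,
   encoded with matrices acting on row vectors: a linear map M_x -> M_y
   with dim M_x = m, dim M_y = n is a matrix A : 'M_(m,n), acting by v |-> v *m A. *)
From HB Require Import structures.
From mathcomp Require Import all_boot all_order all_algebra.
Set Implicit Arguments. Unset Strict Implicit. Unset Printing Implicit Defensive.
Import GRing.Theory.
Local Open Scope ring_scope.

Record quiver := Quiver {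
  qvert : eqType;
  qarr : eqType;
  qsrc : qarr -> qvert;
  qtgt : qarr -> qvert }.

Definition locally_finite (Q : quiver) : Prop :=
  forall x : qvert Q, exists s : seq (qarr Q),
    forall a : qarr Q, (qsrc a == x) || (qtgt a == x) -> a \in s.

Record rep (k : fieldType) (Q : quiver) := Rep {
  rdim : qvert Q -> nat;
  rmap : forall a : qarr Q, 'M[k]_(rdim (qsrc a), rdim (qtgt a)) }.

Definition fin_dim (k : fieldType) (Q : quiver) (M : rep k Q) : Prop :=
  exists s : seq (qvert Q), forall x, rdim M x != 0%N -> x \in s.

Definition is_morph (k : fieldType) (Q : quiver) (M N : rep k Q)
  (f : forall x, 'M[k]_(rdim M x, rdim N x)) : Prop :=
  forall a : qarr Q, rmap M a *m f (qtgt a) = f (qsrc a) *m rmap N a.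

Definition short_exact (k : fieldType) (Q : quiver) (N E M : rep k Q)
  (i : forall x, 'M[k]_(rdim N x, rdim E x))
  (p : forall x, 'M[k]_(rdim E x, rdim M x)) : Prop :=
  is_morph i /\ is_morph p /\
  forall x, [/\ row_free (i x), row_full (p x) & (i x == kermx (p x))%MS].

(* Ext^1(M,N) = 0 in the category of finite-dimensional representations:
   every extension 0 -> N -> E -> M -> 0 with E finite-dimensional splits,
   i.e. p admits a section which is a morphism of representations. *)
Definition Ext1_vanishes (k : fieldType) (Q : quiver) (M N : rep k Q) : Prop :=
  forall (E : rep k Q) (i : forall x, 'M[k]_(rdim N x, rdim E x))
         (p : forall x, 'M[k]_(rdim E x, rdim M x)),
    fin_dim E -> short_exact i p ->
    exists s : forall x, 'M[k]_(rdim M x, rdim E x),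
      is_morph s /\ forall x, s x *m p x = 1%:M.

(* Main.v *)
Require Import Defs.
From mathcomp Require Import all_boot all_order all_algebra.
Set Implicit Arguments. Unset Strict Implicit. Unset Printing Implicit Defensive.
Import GRing.Theory.
Local Open Scope ring_scope.

Lemma ker_vec (k : fieldType) m n (A : 'M[k]_(m, n)) :
  ~~ row_free A -> exists u : 'rV_m, u *m A = 0 /\ u != 0.
Proof.
rewrite -kermx_eq0 => /rowV0Pn [v sv nz]; exists v; split => //.
by apply/eqP; rewrite -sub_kermx.
Qed.

Lemma coker_vec (k : fieldType) m n (A : 'M[k]_(m, n)) :
  ~~ row_full A -> exists c : 'cV_n, A *m c = 0 /\ c != 0.
Proof.
move=> h; have : ~~ row_free A^T by rewrite /row_free mxrank_tr.
case/ker_vec => v [hv nz]; exists v^T; split.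
  by apply: trmx_inj; rewrite trmx_mul trmxK hv trmx0.
by apply: contra nz => /eqP h0; rewrite -[v]trmxK h0 trmx0.
Qed.

Lemma delta_form (k : fieldType) m n (u : 'rV[k]_m) (c : 'cV[k]_n) i j :
  (u *m delta_mx i j *m c) 0 0 = u 0 i * c j 0.
Proof.
rewrite !mxE (bigD1 j) //= big1 ?addr0; last first.
  move=> b /negbTE hb; rewrite !mxE (bigD1 i) //= big1 ?addr0.
    by rewrite !mxE eqxx hb /= mulr0 mul0r.
  by move=> a /negbTE ha; rewrite !mxE ha /= mulr0.
congr (_ * _); rewrite !mxE (bigD1 i) //= big1 ?addr0.
  by rewrite !mxE !eqxx mulr1.
by move=> a /negbTE ha; rewrite !mxE ha /= mulr0.
Qed.

Definition Dmap (k : fieldType) (Q : quiver) (M : rep k Q) (a : qarr Q)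
  (phi : 'M[k]_(rdim M (qsrc a), rdim M (qtgt a))) (b : qarr Q) :
  'M[k]_(rdim M (qsrc b), rdim M (qtgt b)) :=
  match @eqP _ a b with
  | ReflectT e => eq_rect a (fun b => 'M[k]_(rdim M (qsrc b), rdim M (qtgt b))) phi b e
  | ReflectF _ => 0
  end.

Lemma Dmap_a (k : fieldType) (Q : quiver) (M : rep k Q) (a : qarr Q) phi :
  @Dmap k Q M a phi a = phi.
Proof.
rewrite /Dmap; case: eqP => // e.
by rewrite (eq_irrelevance e erefl).
Qed.

Definition Erep (k : fieldType) (Q : quiver) (M : rep k Q) (a : qarr Q) phi : rep k Q :=
  @Rep k Q (fun x => (rdim M x + rdim M x)%N)
    (fun b => block_mx (rmap M b) (@Dmap k Q M a phi b) 0 (rmap M b)).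

Theorem lemma2 (k : fieldType) (Q : quiver) (M : rep k Q) :
  locally_finite Q -> fin_dim M -> Ext1_vanishes M M ->
  forall a : qarr Q, row_free (rmap M a) \/ row_full (rmap M a).
Proof.
move=> _ [sM hsM] hext a.
case fr: (row_free (rmap M a)); first by left.
case fu: (row_full (rmap M a)); first by right.
exfalso.
have [u [hu nzu]] := ker_vec (negbT fr).
have [c [hc nzc]] := coker_vec (negbT fu).
have [i hi] := rV0Pn _ nzu.
have [j hj] := cV0Pn _ nzc.
pose phi := delta_mx i j : 'M[k]_(rdim M (qsrc a), rdim M (qtgt a)).
pose E := @Erep k Q M a phi.
pose ii := fun x => row_mx 0 1%:M : 'M[k]_(rdim M x, rdim E x).
pose pp := fun x => col_mx 1%:M 0 : 'M[k]_(rdim E x, rdim M x).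
have finE : fin_dim E.
  exists sM => x hx; apply: hsM; apply: contra hx => /eqP h.
  by rewrite /= h.
have seq : short_exact ii pp.
  split; [|split].
  - rewrite /is_morph => b; rewrite /ii /= mul_mx_row mulmx0 mulmx1.
    rewrite (@mul_row_block _ _ (rdim M (qsrc b)) (rdim M (qsrc b)) (rdim M (qtgt b)) (rdim M (qtgt b))).
    by rewrite !mul0mx !mul1mx !add0r.
  - rewrite /is_morph => b; rewrite /pp /= (@mul_col_mx _ (rdim M (qsrc b)) (rdim M (qsrc b))).
    rewrite !mul_row_col !mul_col_mx !mulmx1 !mulmx0 !mul1mx !mul0mx !addr0.
    done.
  - move=> x; split.
    + by apply/row_freeP; exists (col_mx 0 1%:M); rewrite mul_row_col mul0mx mulmx1 add0r.
    + by apply/row_fullP; exists (row_mx 1%:M 0); rewrite mul_row_col mulmx1 mul0mx addr0.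
    + rewrite -(eq_leqif (mxrank_leqif_eq _)).
        rewrite mxrank_ker.
        have -> : \rank (pp x) = rdim M x by rewrite /pp rank_col_mx0 mxrank1.
        rewrite /ii rank_row_0mx mxrank1 /= addnK //.
      by rewrite sub_kermx /ii /pp mul_row_col mul0mx mulmx0 addr0.
have [s [ms hs]] := hext E ii pp finE seq.
pose Z := fun x => s x *m col_mx 0 1%:M.
have key : rmap M a *m Z (qtgt a) = phi + Z (qsrc a) *m rmap M a.
  rewrite /Z mulmxA (ms a) -mulmxA /=.
  rewrite (@mul_block_col _ (rdim M (qsrc a)) (rdim M (qsrc a)) (rdim M (qtgt a)) (rdim M (qtgt a))).
  rewrite ?mulmx0 ?mul0mx ?mulmx1 ?add0r ?addr0.
  have -> : col_mx (@Dmap k Q M a phi a) (rmap M a)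
      = pp (qsrc a) *m phi + col_mx 0 1%:M *m rmap M a.
    by rewrite /pp !mul_col_mx !mul1mx !mul0mx Dmap_a add_col_mx addr0 add0r.
  by rewrite mulmxDr (mulmxA (s _)) hs mul1mx mulmxA.
have : u *m phi *m c = 0.
  have -> : phi = rmap M a *m Z (qtgt a) - Z (qsrc a) *m rmap M a.
    by rewrite key addrK.
  by rewrite mulmxBr mulmxBl !mulmxA hu !mul0mx sub0r -!mulmxA hc !mulmx0 oppr0.
move=> h0; have := delta_form u c i j; rewrite h0 mxE => /esym/eqP.
by rewrite mulf_eq0 (negbTE hi) (negbTE hj).
Qed.
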